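(* For any $n$-qubit pure state $\ket{\psi}$, $\Lambda_{\max}(\ket{\psi})\le\sqrt{1-\frac{\mathcal{C}(\ket{\psi})^2}{2}}$, and hence $E_g(\ket{\psi})\ge\frac{\mathcal{C}(\ket{\psi})^2}{2}$.
   Context: $\Lambda_{\max}(\ket{\psi})=\max|\langle\phi|\psi\rangle|$, the maximum over fully product states $\ket{\phi}=\bigotimes_{i=1}^n\ket{a_i}$ of single-qubit pure states; the geometric measure of entanglement is $E_g(\ket{\psi})=1-\Lambda_{\max}(\ket{\psi})^2$. $\mathcal{C}(\ket{\psi})=1-\frac{1}{2^{n}}\sum_{\alpha\subseteq [n]}\mathrm{Tr}[\rho_\alpha^2]$, with $\rho_\alpha$ the reduced state on $\alpha$ and $\mathrm{Tr}[\rho_\emptyset^2]=1$. *)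

(* Defs.v *)
From HB Require Import structures.
From mathcomp Require Import all_boot all_order all_algebra.
From mathcomp Require Import complex.
From mathcomp Require Import classical_sets reals.
Set Implicit Arguments. Unset Strict Implicit. Unset Printing Implicit Defensive.
Import Order.TTheory GRing.Theory Num.Theory.
Local Open Scope ring_scope.

(* Computational basis of n qubits: bit strings x : 'I_n -> bool. *)
Definition cfg (n : nat) := {ffun 'I_n -> bool}.

Section Qubits.
Variable R : realType.
Local Notation C := (R[i]).

Definition cabs (z : C) : R := Normc.normc z.

Definition pure_state (n : nat) (psi : cfg n -> C) : Prop :=
  \sum_(x : cfg n) cabs (psi x) ^+ 2 = 1.

(* A single-qubit pure state a = a.1 |0> + a.2 |1>, normalized. *)
Definition qubit_state (a : C * C) : Prop := cabs a.1 ^+ 2 + cabs a.2 ^+ 2 = 1.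

Definition prod_amp (n : nat) (a : 'I_n -> C * C) (x : cfg n) : C :=
  \prod_(i : 'I_n) (if x i then (a i).2 else (a i).1).

Definition inner (n : nat) (phi psi : cfg n -> C) : C :=
  \sum_(x : cfg n) conjc (phi x) * psi x.

Definition Lambda_max (n : nat) (psi : cfg n -> C) : R :=
  sup [set r : R | exists a : 'I_n -> C * C,
         (forall i, qubit_state (a i)) /\ r = cabs (inner (prod_amp a) psi)]%classic.

Definition geometric_measure (n : nat) (psi : cfg n -> C) : R :=
  1 - Lambda_max psi ^+ 2.

Definition glue (n : nat) (alpha : {set 'I_n}) (x z : cfg n) : cfg n :=
  [ffun i => if i \in alpha then x i else z i].

(* basis strings of the subsystem alpha (coordinates outside alpha set to 0) *)
Definition supp_on (n : nat) (alpha : {set 'I_n}) (x : cfg n) : bool :=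
  [forall i, (i \notin alpha) ==> ~~ x i].

(* reduced density matrix rho_alpha = Tr_{complement alpha} |psi><psi| *)
Definition rho (n : nat) (alpha : {set 'I_n}) (psi : cfg n -> C) (x y : cfg n) : C :=
  \sum_(z : cfg n | supp_on (~: alpha) z)
     psi (glue alpha x z) * conjc (psi (glue alpha y z)).

Definition purity (n : nat) (alpha : {set 'I_n}) (psi : cfg n -> C) : C :=
  \sum_(x : cfg n | supp_on alpha x) \sum_(y : cfg n | supp_on alpha y)
     rho alpha psi x y * rho alpha psi y x.

(* C(psi) = 1 - 2^{-n} sum_alpha Tr[rho_alpha^2]  (real part taken; the
   purity is real) *)
Definition concentratable (n : nat) (psi : cfg n -> C) : R :=
  1 - (2 ^+ n)^-1 * \sum_(alpha : {set 'I_n}) @complex.Re R (purity alpha psi).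

End Qubits.

(* Main.v *)
Require Import Defs.
From HB Require Import structures.
From mathcomp Require Import all_boot all_order all_algebra.
From mathcomp Require Import complex.
From mathcomp Require Import classical_sets reals.
From mathcomp Require Import ring lra.
Import Order.TTheory GRing.Theory Num.Theory.
Local Open Scope ring_scope.

Section Proof.
Variable R : realType.
Local Notation C := R[i].
Variable n : nat.
Implicit Types (alpha beta : {set 'I_n}) (u v x z : cfg n).
Implicit Types (psi : cfg n -> C).

Definition mask alpha u : cfg n := [ffun i => (i \in alpha) && u i].

Lemma supp_mask alpha u : supp_on alpha (mask alpha u).
Proof. by apply/forallP => i; rewrite ffunE; case: (i \in alpha). Qed.

Lemma glue_mask alpha u v :
  glue alpha (mask alpha u) (mask (~: alpha) v) = glue alpha u v.
Proof. by apply/ffunP => i; rewrite !ffunE finset.in_setC; case: (i \in alpha). Qed.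

Lemma glue_id alpha u : glue alpha u u = u.
Proof. by apply/ffunP => i; rewrite !ffunE; case: (i \in alpha). Qed.

Lemma mask_glue alpha x z : supp_on alpha x -> mask alpha (glue alpha x z) = x.
Proof.
move/forallP => H; apply/ffunP => i; rewrite !ffunE.
case: (boolP (i \in alpha)) => //= Hi.
by have := H i; rewrite Hi /=; case: (x i).
Qed.

Lemma maskC_glue alpha x z :
  supp_on (~: alpha) z -> mask (~: alpha) (glue alpha x z) = z.
Proof.
move/forallP => H; apply/ffunP => i; rewrite !ffunE finset.in_setC.
case: (boolP (i \in alpha)) => //= Hi.
by have := H i; rewrite finset.in_setC Hi /=; case: (z i).
Qed.

Lemma sum_split (F : cfg n -> cfg n -> C) alpha :
  \sum_(x | supp_on alpha x) \sum_(z | supp_on (~: alpha) z) F x z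
  = \sum_u F (mask alpha u) (mask (~: alpha) u).
Proof.
rewrite pair_big_dep /=.
rewrite (reindex (fun u => (mask alpha u, mask (~: alpha) u))) /=.
  by apply: eq_bigl => u; rewrite !supp_mask.
exists (fun p => glue alpha p.1 p.2) => [u _ | [x z]] /=.
  by rewrite glue_mask glue_id.
by rewrite inE => /andP[Hx Hz]; rewrite mask_glue // maskC_glue.
Qed.

Definition Psi (psi : cfg n -> C) (p : cfg n * cfg n) := psi p.1 * psi p.2.
Definition S alpha (p : cfg n * cfg n) := (glue alpha p.2 p.1, glue alpha p.1 p.2).

Lemma purityE psi alpha :
  purity alpha psi = \sum_p Psi psi p * conjc (Psi psi (S alpha p)).
Proof.
rewrite /purity /rho.
under eq_bigr => x _ do under eq_bigr => y _ do rewrite big_distrlr /=.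
under eq_bigr => x _ do rewrite exchange_big /=.
under eq_bigr => x _ do under eq_bigr => z _ do rewrite sum_split.
rewrite sum_split pair_bigA /=.
apply: eq_bigr => -[u v] _ /=.
rewrite !glue_mask !glue_id /Psi /S /= rmorphM /=.
by rewrite mulrACA.
Qed.

Definition sd alpha beta : {set 'I_n} := [set i | (i \in alpha) != (i \in beta)].

Lemma sdK alpha : involutive (sd alpha).
Proof. by move=> beta; apply/setP => i; rewrite !inE; case: (i \in alpha); case: (i \in beta). Qed.

Lemma SK alpha : involutive (S alpha).
Proof.
move=> [u v]; rewrite /S /=; congr pair; apply/ffunP => i; rewrite !ffunE;
by case: (i \in alpha).
Qed.

Lemma S_comp alpha beta p : S beta (S alpha p) = S (sd alpha beta) p.
Proof.
case: p => u v; rewrite /S /=; congr pair; apply/ffunP => i; rewrite !ffunE inE;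
by case: (i \in alpha); case: (i \in beta).
Qed.

Lemma card_sets : #|{set 'I_n}| = (2 ^ n)%N.
Proof. by rewrite -cardsT -powersetT card_powerset cardsT card_ord. Qed.

Lemma sum_const_sets (c : C) : \sum_(alpha : {set 'I_n}) c = 2 ^+ n * c.
Proof. rewrite sumr_const (_ : #|xpredT| = #|{set 'I_n}|) // card_sets -[LHS]mulr_natl natrX. reflexivity. Qed.

Definition Q psi p := \sum_(alpha : {set 'I_n}) Psi psi (S alpha p).

Lemma normQ psi :
  \sum_p Q psi p * conjc (Q psi p) = 2 ^+ n * \sum_(g : {set 'I_n}) purity g psi.
Proof.
rewrite /Q.
under eq_bigr => p _ do rewrite rmorph_sum big_distrlr /=.
rewrite exchange_big /=.
transitivity (\sum_(alpha : {set 'I_n}) \sum_(g : {set 'I_n}) purity g psi);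
  last by rewrite sum_const_sets.
apply: eq_bigr => alpha _.
rewrite (reindex_inj (can_inj (SK alpha))) /=.
under eq_bigr => p _ do under eq_bigr => beta _ do rewrite SK S_comp.
rewrite exchange_big /=.
rewrite [RHS](reindex_inj (can_inj (sdK alpha))) /=.
apply: eq_bigr => beta _; by rewrite purityE.
Qed.

Definition Phi (a : 'I_n -> C * C) p := prod_amp a p.1 * prod_amp a p.2.

Lemma Phi_S a alpha p : Phi a (S alpha p) = Phi a p.
Proof.
rewrite /Phi /prod_amp /= -!big_split /=; apply: eq_bigr => i _; rewrite !ffunE.
by case: (i \in alpha) => //; rewrite mulrC.
Qed.

Lemma innerQ a psi :
  \sum_p conjc (Phi a p) * Q psi p = 2 ^+ n * (inner (prod_amp a) psi) ^+ 2.
Proof.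
rewrite /Q.
under eq_bigr => p _ do rewrite big_distrr /=.
rewrite exchange_big /=.
transitivity (\sum_(alpha : {set 'I_n}) (inner (prod_amp a) psi) ^+ 2);
  last by rewrite sum_const_sets.
apply: eq_bigr => alpha _.
rewrite (reindex_inj (can_inj (SK alpha))) /=.
under eq_bigr => p _ do rewrite SK Phi_S.
rewrite /inner expr2 big_distrlr pair_bigA /=.
apply: eq_bigr => -[u v] _ /=.
by rewrite /Phi /Psi /= rmorphM /= mulrACA.
Qed.

Lemma CS (T : finType) (F G : T -> C) :
  \sum_p F p * conjc (F p) = 1 -> forall t, t = \sum_p conjc (F p) * G p ->
  t * conjc t <= \sum_p G p * conjc (G p).
Proof.
move=> HF t Ht.
have H0 : 0 <= \sum_p (G p - t * F p) * conjc (G p - t * F p).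
  by apply: sumr_ge0 => p _; apply: mulcJ_ge0.
have E : \sum_p (G p - t * F p) * conjc (G p - t * F p) =
   \sum_p G p * conjc (G p) - conjc t * (\sum_p G p * conjc (F p))
   - t * (\sum_p F p * conjc (G p)) + t * conjc t * (\sum_p F p * conjc (F p)).
  rewrite !big_distrr /= -!sumrB -big_split /=.
  apply: eq_bigr => p _; rewrite rmorphB rmorphM /=; ring.
have E1 : \sum_p G p * conjc (F p) = t.
  by rewrite Ht; apply: eq_bigr => p _; rewrite mulrC.
have E2 : \sum_p F p * conjc (G p) = conjc t.
  by rewrite Ht rmorph_sum; apply: eq_bigr => p _; rewrite rmorphM /= conjcK.
rewrite E E1 E2 HF in H0.
by rewrite -subr_ge0; move: H0; congr (0 <= _); ring.
Qed.

Local Open Scope complex_scope.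
Lemma cabs2 (z : C) : ((cabs z) ^+ 2)%:C = z * conjc z.
Proof.
case: z => a b; rewrite /cabs /= sqr_sqrtr ?addr_ge0 ?sqr_ge0 //.
apply/eqP; rewrite eq_complex /=; apply/andP; split; apply/eqP; ring.
Qed.
Local Close Scope complex_scope.


Lemma pair_norm (f : cfg n -> C) :
  \sum_(p : cfg n * cfg n) (f p.1 * f p.2) * conjc (f p.1 * f p.2)
  = (\sum_u f u * conjc (f u)) ^+ 2.
Proof.
rewrite expr2 big_distrlr pair_bigA /=.
by apply: eq_bigr => -[u v] _ /=; rewrite rmorphM /= mulrACA.
Qed.

Lemma norm_state psi : pure_state psi -> \sum_u psi u * conjc (psi u) = 1.
Proof.
rewrite /pure_state => H.
have := congr1 (real_complex R) H; rewrite rmorph_sum rmorph1 /= => <-.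
by apply: eq_bigr => u _; rewrite cabs2.
Qed.

Lemma normPsi psi : pure_state psi -> \sum_p Psi psi p * conjc (Psi psi p) = 1.
Proof. by move=> H; rewrite /Psi pair_norm norm_state // expr1n. Qed.

Lemma norm_prod (a : 'I_n -> C * C) : (forall i, qubit_state (a i)) ->
  \sum_u prod_amp a u * conjc (prod_amp a u) = 1.
Proof.
move=> Ha.
under eq_bigr => u _ do rewrite /prod_amp rmorph_prod -big_split /=.
rewrite -(bigA_distr_bigA (fun i b => (if b then (a i).2 else (a i).1) *
   conjc (if b then (a i).2 else (a i).1))) /=.
apply: big1 => i _.
rewrite big_bool /=.
have := congr1 (real_complex R) (Ha i); rewrite /qubit_state rmorphD rmorph1 /= !cabs2.
by rewrite addrC.

Qed.

Lemma normPhi a : (forall i, qubit_state (a i)) ->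
  \sum_p Phi a p * conjc (Phi a p) = 1.
Proof. by move=> H; rewrite /Phi pair_norm norm_prod // expr1n. Qed.

Lemma purity_bound psi alpha : pure_state psi ->
  purity alpha psi + conjc (purity alpha psi) <= 2.
Proof.
move=> Hpsi; rewrite purityE rmorph_sum -big_split /=.
apply: (@le_trans _ _ (\sum_p (Psi psi p * conjc (Psi psi p)
     + Psi psi (S alpha p) * conjc (Psi psi (S alpha p))))).
  apply: ler_sum => p _.
  set x := Psi psi p; set y := Psi psi (S alpha p).
  clearbody x y.
  have := mulcJ_ge0 (x - y); rewrite rmorphB /=.
  rewrite -subr_ge0 => H; rewrite -subr_ge0.
  by move: H; rewrite rmorphM /= conjcK; congr (0 <= _); ring.
have E : \sum_p Psi psi (S alpha p) * conjc (Psi psi (S alpha p)) =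
   \sum_p Psi psi p * conjc (Psi psi p).
  by rewrite [RHS](reindex_inj (can_inj (SK alpha))).
by rewrite big_split /= E normPsi.
Qed.

Lemma real_2n : ((2 ^+ n : R))%:C%C = 2 ^+ n :> C.
Proof. by rewrite rmorphXn rmorph_nat. Qed.

Lemma key psi : pure_state psi ->
  let k := (2 ^+ n)^-1 * \sum_(g : {set 'I_n}) @complex.Re R (purity g psi) in
  0 <= k <= 1 /\ forall a, (forall i, qubit_state (a i)) ->
     cabs (inner (prod_amp a) psi) ^+ 4 <= k.
Proof.
move=> Hpsi k.
set K := \sum_(g : {set 'I_n}) purity g psi.
have n2 : (0 : C) < 2 ^+ n by rewrite exprn_gt0 // ltr0n.
have Kge0 : 0 <= K.
  have : 0 <= \sum_p Q psi p * conjc (Q psi p).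
    by apply: sumr_ge0 => p _; apply: mulcJ_ge0.
  by rewrite normQ pmulr_rge0.
have KR : (\sum_(g : {set 'I_n}) @complex.Re R (purity g psi))%:C%C = K.
  rewrite -(RRe_real (ger0_real Kge0)); congr (_ %:C)%C.
  by rewrite /K (@raddf_sum _ _ (@complex.Re R)).
set kR := \sum_(g : {set 'I_n}) @complex.Re R (purity g psi).
have N0 : (0 : R) < 2 ^+ n by rewrite exprn_gt0.
have kR0 : 0 <= kR by rewrite -ler0c KR.
have kR1 : kR <= 2 ^+ n.
  have : K + conjc K <= \sum_(g : {set 'I_n}) 2.
    by rewrite /K rmorph_sum -big_split /=; apply: ler_sum => g _; apply: purity_bound.
  rewrite sum_const_sets -KR conjc_real -real_2n -rmorphD -(rmorph_nat (real_complex R)).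
  rewrite -rmorphM lecR => H.
  change (is_true (kR + kR <= 2 ^+ n * 2)) in H.
  clear -H; lra.
split.
  rewrite /k ler_pdivlMl // mulr0 kR0 /=.
  by rewrite ler_pdivrMl // mulr1.
move=> a Ha.
have H := @CS _ _ _ (normPhi a Ha) _ (esym (innerQ a psi)).
rewrite normQ -/K -KR in H.
set s := inner (prod_amp a) psi in H *.
set r := cabs s.
have Er : ((r ^+ 2 : R))%:C%C = s * conjc s by apply: cabs2.
have E2 : conjc (2 ^+ n : C) = 2 ^+ n by rewrite rmorphXn rmorph_nat.
have EL : 2 ^+ n * s ^+ 2 * conjc (2 ^+ n * s ^+ 2) = 2 ^+ n * 2 ^+ n * (s * conjc s) ^+ 2.
  by rewrite rmorphM /= E2 rmorphXn /=; ring.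
have ER : ((2 ^+ n * 2 ^+ n * (r ^+ 2) ^+ 2 : R))%:C%C = 2 ^+ n * 2 ^+ n * (s * conjc s) ^+ 2.
  rewrite -Er [LHS]rmorphM rmorphM !rmorphXn rmorph_nat. reflexivity.
have E : 2 ^+ n * s ^+ 2 * conjc (2 ^+ n * s ^+ 2) =
   ((2 ^+ n * 2 ^+ n * (r ^+ 2) ^+ 2 : R))%:C%C by rewrite EL ER.
rewrite E -real_2n -rmorphM lecR in H.
rewrite /k ler_pdivlMl // -(ler_pM2l N0) (le_trans _ H) //.
by rewrite mulrA -exprM.
Qed.

End Proof.

Lemma real_ineq (R : realType) (r k : R) :
  0 <= r -> r ^+ 4 <= k -> 0 <= k -> k <= 1 ->
  r ^+ 2 <= 1 - (1 - k) ^+ 2 / 2.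
Proof.
move=> r0 rk k0 k1.
set s := r ^+ 2.
have s0 : 0 <= s by rewrite /s sqr_ge0.
have sk : s ^+ 2 <= k by rewrite /s -exprM.
have s1 : s <= 1 by nra.
have h1 : (1 - k) ^+ 2 <= (1 - s ^+ 2) ^+ 2 by nra.
have h2 : (1 - s ^+ 2) ^+ 2 <= 2 * (1 - s).
  have e : (1 - s ^+ 2) ^+ 2 = (1 - s) * ((1 - s) * (1 + s) ^+ 2) by ring.
  have h3 : (1 - s) * (1 + s) ^+ 2 <= 2 by nra.
  have h4 : 0 <= 1 - s by lra.
  rewrite e -subr_ge0.
  have -> : 2 * (1 - s) - (1 - s) * ((1 - s) * (1 + s) ^+ 2) =
            (1 - s) * (2 - (1 - s) * (1 + s) ^+ 2) by ring.
  by apply: mulr_ge0 => //; lra.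
lra.
Qed.

Theorem mainTheorem15 (R : realType) (n : nat) (psi : cfg n -> R[i]) :
  pure_state psi ->
  Lambda_max psi <= Num.sqrt (1 - concentratable psi ^+ 2 / 2) /\
  concentratable psi ^+ 2 / 2 <= geometric_measure psi.
Proof.
move=> Hpsi.
have [/andP[k0 k1] Hk] := @key R n psi Hpsi.
set k := _ * _ in k0 k1 Hk.
have Ec : concentratable psi = 1 - k by [].
rewrite /geometric_measure Ec.
set X := 1 - (1 - k) ^+ 2 / 2.
have X0 : 0 <= X by rewrite /X; nra.
set E := [set r : R | exists a : 'I_n -> R[i] * R[i],
         (forall i, qubit_state (a i)) /\ r = cabs (inner (prod_amp a) psi)]%classic.
have ub : forall r, E r -> 0 <= r /\ r <= Num.sqrt X.
  move=> r [a [Ha ->]].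
  have r0 : 0 <= cabs (inner (prod_amp a) psi).
    by rewrite /cabs; case: (inner _ _) => ? ?; apply: sqrtr_ge0.
  split => //.
  rewrite -(ger0_norm r0) -sqrtr_sqr; apply: ler_wsqrtr.
  exact: real_ineq (Hk a Ha) k0 k1.
pose a0 := fun _ : 'I_n => ((1 : R[i]), (0 : R[i])).
have Ea0 : E (cabs (inner (prod_amp a0) psi)).
  exists a0; split => // i.
  by rewrite /qubit_state /a0 /= /cabs /= !expr0n /= !addr0 expr1n sqrtr1 sqrtr0 expr1n expr0n addr0.
have LB : Lambda_max psi <= Num.sqrt X.
  apply: ge_sup; first by exists (cabs (inner (prod_amp a0) psi)).
  by move=> r /ub [].
have L0 : 0 <= Lambda_max psi.
  have := (ub _ Ea0).1; move/le_trans; apply.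
  apply: sup_upper_bound => //; split; first by exists (cabs (inner (prod_amp a0) psi)).
  by exists (Num.sqrt X) => r /ub [].
split => //.
have : Lambda_max psi ^+ 2 <= X.
  rewrite -(sqr_sqrtr X0); have := sqrtr_ge0 X; nra.
rewrite /X; lra.
Qed.
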